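(* Let $\mathcal{S}=\{s_1,\dots,s_M\}$ and let $\{S(\tau)\}_{\tau\ge 0}$ be independent $\mathcal{S}$-valued random variables with $\Pr\{S(\tau)=s_i\}=\pi_i(\tau)$. Fix a time $t$, a prediction window parameter $w\ge 0$, an integer $d\ge w+1$ with $t+w+1-d\ge 0$, and predicted distributions $\hat{\boldsymbol\pi}(t+k)$, $k=0,\dots,w$, satisfying $\|\hat{\boldsymbol\pi}(t+k)-\boldsymbol\pi(t+k)\|_{tv}\le e(k)$; put $e_w=\frac{1}{w+1}\sum_{k=0}^w e(k)$. Define $$\hat\pi^d_i=\frac1d\Big(\sum_{\tau=t+w+1-d}^{t-1}\mathbf 1_{[S(\tau)=s_i]}+\sum_{k=0}^{w}\hat\pi_i(t+k)\Big),$$ and let $\mathcal W_m$ be a set of $n_m\ge d$ time slots, all strictly smaller than $t+w+1-d$, with $\hat\pi^m_i=\frac1{n_m}\sum_{\tau\in\mathcal W_m}\mathbf 1_{[S(\tau)=s_i]}$. Suppose $\boldsymbol\pi(\tau)=\boldsymbol\pi_1$ for all $\tau\in\{t+w+1-d,\dots,t+w\}$ and $\boldsymbol\pi(\tau)=\boldsymbol\pi_2\neq\boldsymbol\pi_1$ for all $\tau\in\mathcal W_m$, and that $\max_i|\pi_{1i}-\pi_{2i}|>4(w+1)e_w/d$. Let $\delta\in(0,1)$, and let $\epsilon_d$ satisfy $0<\epsilon_d<\epsilon_0:=\tfrac12\max_i|\pi_{1i}-\pi_{2i}|-(w+1)e_w/d$ and $d>\ln\frac4\delta\cdot\frac{1}{2\epsilon_d^2}+w+1$.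 Then with probability at least $1-\delta$, $$\|\hat{\boldsymbol\pi}^d-\hat{\boldsymbol\pi}^m\|_{tv}>\epsilon_d,$$ i.e. the change test in step (i) of the ADE procedure fires at time $t$, so that ADE resets both windows to start at $t+w+1$ (the window $\mathcal W_m$ becomes empty).
   Context: For distributions $\boldsymbol\pi_1,\boldsymbol\pi_2$ on $\mathcal S$, $\|\boldsymbol\pi_1-\boldsymbol\pi_2\|_{tv}:=\sum_i|\pi_{1i}-\pi_{2i}|$. The ADE (average distribution estimate) procedure maintains a ''detection window'' consisting of the $d$ most recent samples, namely the observed states in slots $t+w+1-d,\dots,t-1$ together with the $w+1$ predicted distributions for slots $t,\dots,t+w$ (its estimate is $\hat{\boldsymbol\pi}^d$ above), and an earlier ''memory window'' $\mathcal W_m$ of observed states (estimate $\hat{\boldsymbol\pi}^m$). Its step (i) reads: if $|\mathcal W_m|\ge d$ and $\|\hat{\boldsymbol\pi}^d-\hat{\boldsymbol\pi}^m\|_{tv}>\epsilon_d$, declare a distribution change and restart both windows at slot $t+w+1$. *)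

(* Defs.v *)
From Stdlib Require Import Reals.
From HB Require Import structures.
From mathcomp Require Import all_boot.
Set Implicit Arguments. Unset Strict Implicit. Unset Printing Implicit Defensive.
Local Open Scope R_scope.

(* total-variation distance as in the paper: sum_i |p_i - q_i| *)
Definition tv (M : nat) (p q : 'I_M -> R) : R :=
  \big[Rplus/0]_(i < M) Rabs (p i - q i).

Definition maxdiff (M : nat) (p q : 'I_M -> R) : R :=
  \big[Rmax/0]_(i < M) Rabs (p i - q i).

Definition is_distr (M : nat) (p : 'I_M -> R) : Prop :=
  (forall i, (0 <= p i)) /\ \big[Rplus/0]_(i < M) p i = 1.

Definition ind (b : bool) : R := if b then 1 else 0.

(* Joint law of the independent variables S(0),...,S(t-1) (product measure):
   probability of an event E about the outcome f (f tau = index of S(tau)). *)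
Definition joint_prob (t M : nat) (pi : nat -> 'I_M -> R)
    (E : {ffun 'I_t -> 'I_M} -> bool) : R :=
  \big[Rplus/0]_(f : {ffun 'I_t -> 'I_M})
     ((\big[Rmult/1]_(tau < t) pi (tau : nat) (f tau)) * ind (E f)).

Definition pihat_d (t M w d : nat) (hatpi : nat -> 'I_M -> R)
    (f : {ffun 'I_t -> 'I_M}) (i : 'I_M) : R :=
  (/ INR d * (\big[Rplus/0]_(tau < t | (t + w + 1 - d <= tau)%N) ind (f tau == i)
             + \big[Rplus/0]_(k < w.+1) hatpi (t + k)%N i)).

Definition pihat_m (t M : nat) (Wm : {set 'I_t})
    (f : {ffun 'I_t -> 'I_M}) (i : 'I_M) : R :=
  (/ INR #|Wm| * \big[Rplus/0]_(tau in Wm) ind (f tau == i)).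

Definition ew (w : nat) (e : nat -> R) : R :=
  (/ INR (w + 1) * \big[Rplus/0]_(k < w.+1) e k).

(* Main.v *)
From Coquelicot Require Import Coquelicot.
From Stdlib Require Import Reals Lra Psatz.
Open Scope R_scope.
Lemma hoeff (p x : R) : 0 <= p <= 1 ->
  (1 - p) * exp (- (x * p)) + p * exp (x * (1 - p)) <= exp (x ^ 2 / 8).
Proof.
intros Hp.
set (B := fun y => 1 - p + p * exp y).
assert (HB : forall y, 0 < B y).
{ intro y; unfold B. pose proof (exp_pos y).
  destruct (Req_dec p 0) as [->|Hp0]; [lra|].
  assert (0 < p * exp y) by (apply Rmult_lt_0_compat; lra). lra. }
set (q := fun y => p * exp y / B y).
assert (Hq : forall y, 0 <= q y <= 1).
{ intro y; unfold q; pose proof (HB y); pose proof (exp_pos y).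
  split.
  - apply Rmult_le_pos; [apply Rmult_le_pos; lra|left; apply Rinv_0_lt_compat; lra].
  - apply Rmult_le_reg_r with (B y); [lra|]. unfold Rdiv; rewrite Rmult_assoc, Rinv_l by lra.
    unfold B; lra. }
set (h := fun y => y ^ 2 / 8 - ln (B y) + p * y).
set (h1 := fun y => y / 4 - q y + p).
set (h2 := fun y => / 4 - q y * (1 - q y)).
assert (D1 : forall y, is_derive h y (h1 y)).
{ intro y; unfold h, h1, q, B. pose proof (HB y). unfold B in H.
  auto_derive. lra. field. lra. }
assert (D2 : forall y, is_derive h1 y (h2 y)).
{ intro y; unfold h1, h2, q, B. pose proof (HB y). unfold B in H.
  auto_derive. lra. field. lra. }
assert (H2 : forall y, 0 <= h2 y).
{ intro y; unfold h2. pose proof (pow2_ge_0 (q y - / 2)). nra. }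
assert (Hh : 0 <= h x).
{ assert (h0 : h 0 = 0).
  { unfold h, B; cbv beta. rewrite exp_0. replace (1 - p + p * 1) with 1 by ring. rewrite ln_1. simpl; lra. }
  assert (h10 : h1 0 = 0).
  { unfold h1, q, B; cbv beta. rewrite exp_0. replace (1 - p + p * 1) with 1 by ring. field. }
  destruct (Rtotal_order x 0) as [Hx|[Hx|Hx]].
  - destruct (MVT_cor2 h h1 x 0 Hx) as [c [Hc1 Hc2]].
    { intros c _. apply is_derive_Reals. apply D1. }
    destruct (MVT_cor2 h1 h2 c 0) as [c2 [Hd1 Hd2]]; [lra| |].
    { intros c' _. apply is_derive_Reals. apply D2. }
    pose proof (H2 c2). rewrite h10 in Hd1. rewrite h0 in Hc1.
    assert (h1 c <= 0) by nra. nra.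
  - subst; lra.
  - destruct (MVT_cor2 h h1 0 x Hx) as [c [Hc1 Hc2]].
    { intros c _. apply is_derive_Reals. apply D1. }
    destruct (MVT_cor2 h1 h2 0 c) as [c2 [Hd1 Hd2]]; [lra| |].
    { intros c' _. apply is_derive_Reals. apply D2. }
    pose proof (H2 c2). rewrite h10 in Hd1. rewrite h0 in Hc1.
    assert (0 <= h1 c) by nra. nra. }
unfold h in Hh.
assert (E : (1 - p) * exp (- (x * p)) + p * exp (x * (1 - p)) = B x * exp (- (p * x))).
{ unfold B. replace (x * (1 - p)) with (x + - (p * x)) by ring. rewrite exp_plus.
  replace (- (x * p)) with (- (p * x)) by ring. ring. }
rewrite E.
assert (ln (B x) + - (p * x) <= x ^ 2 / 8) by lra.
rewrite <- (exp_ln (B x)) by apply HB. rewrite <- exp_plus.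
destruct H; [left; apply exp_increasing; auto | rewrite H; lra].
Qed.

Require Import Defs.
From HB Require Import structures.
From mathcomp Require Import all_boot zify.
Set Implicit Arguments. Unset Strict Implicit. Unset Printing Implicit Defensive.
Local Open Scope R_scope.

Lemma RplusA' : associative Rplus. Proof. by move=> *; rewrite Rplus_assoc. Qed.
Lemma RmultA' : associative Rmult. Proof. by move=> *; rewrite Rmult_assoc. Qed.
HB.instance Definition _ := Monoid.isComLaw.Build R 0 Rplus RplusA' Rplus_comm Rplus_0_l.
HB.instance Definition _ := Monoid.isComLaw.Build R 1 Rmult RmultA' Rmult_comm Rmult_1_l.
HB.instance Definition _ := Monoid.isMulLaw.Build R 0 Rmult Rmult_0_l Rmult_0_r.
HB.instance Definition _ := Monoid.isAddLaw.Build R Rmult Rplus Rmult_plus_distr_r Rmult_plus_distr_l.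


Section Helpers.
Variable (I : Type).

Lemma sum_le (r : seq I) (P : pred I) (F G : I -> R) :
  (forall i, P i -> F i <= G i) ->
  \big[Rplus/0]_(i <- r | P i) F i <= \big[Rplus/0]_(i <- r | P i) G i.
Proof. move=> h; apply: (big_ind2 Rle) => //; [lra| move=> *; lra]. Qed.

Lemma sum_ge0 (r : seq I) (P : pred I) (F : I -> R) :
  (forall i, P i -> 0 <= F i) -> 0 <= \big[Rplus/0]_(i <- r | P i) F i.
Proof. move=> h; apply: (big_ind (fun x => 0 <= x)) => //; [lra| move=> *; lra]. Qed.

Lemma prod_ge0 (r : seq I) (P : pred I) (F : I -> R) :
  (forall i, P i -> 0 <= F i) -> 0 <= \big[Rmult/1]_(i <- r | P i) F i.
Proof. move=> h; apply: (big_ind (fun x => 0 <= x)) => //; [lra| move=> *; nra]. Qed.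

Lemma prod_le (r : seq I) (P : pred I) (F G : I -> R) :
  (forall i, P i -> 0 <= F i <= G i) ->
  \big[Rmult/1]_(i <- r | P i) F i <= \big[Rmult/1]_(i <- r | P i) G i.
Proof.
move=> h.
have : 0 <= \big[Rmult/1]_(i <- r | P i) F i <= \big[Rmult/1]_(i <- r | P i) G i.
  apply: (big_ind2 (fun x y => 0 <= x <= y)) => //; [lra|].
  move=> x1 x2 y1 y2 [? ?] [? ?]; split; [nra|].
  apply Rmult_le_compat; lra.
by case.
Qed.

Lemma abs_sum (r : seq I) (P : pred I) (F : I -> R) :
  Rabs (\big[Rplus/0]_(i <- r | P i) F i) <= \big[Rplus/0]_(i <- r | P i) Rabs (F i).
Proof.
apply: (big_ind2 (fun x y => Rabs x <= y)) => //.
- rewrite Rabs_R0; lra.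
- move=> x1 x2 y1 y2 h1 h2; apply: Rle_trans (Rabs_triang _ _) _; lra.
- move=> *; lra.
Qed.

Lemma exp_sum (r : seq I) (P : pred I) (F : I -> R) :
  exp (\big[Rplus/0]_(i <- r | P i) F i) = \big[Rmult/1]_(i <- r | P i) exp (F i).
Proof. apply: (big_morph exp) => //; [exact: exp_plus| exact: exp_0]. Qed.

Lemma sum_distr (r : seq I) (P : pred I) (F : I -> R) c :
  \big[Rplus/0]_(i <- r | P i) (c * F i) = c * \big[Rplus/0]_(i <- r | P i) F i.
Proof. by rewrite big_distrr. Qed.

Lemma sum_add (r : seq I) (P : pred I) (F G : I -> R) :
  \big[Rplus/0]_(i <- r | P i) (F i + G i) = \big[Rplus/0]_(i <- r | P i) F i + \big[Rplus/0]_(i <- r | P i) G i.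
Proof. by rewrite big_split. Qed.

Lemma sum_opp (r : seq I) (P : pred I) (F : I -> R) :
  \big[Rplus/0]_(i <- r | P i) (- F i) = - \big[Rplus/0]_(i <- r | P i) F i.
Proof. symmetry; apply: (big_morph Ropp) => [x y|]; ring. Qed.

End Helpers.

Lemma iter_plus n c : iter n (Rplus c) 0 = INR n * c.
Proof. elim: n => [|n IH]; first by rewrite /=; ring. rewrite iterS IH S_INR. ring. Qed.

Lemma sum_const_set (T : finType) (A : {set T}) c :
  \big[Rplus/0]_(i in A) c = INR #|A| * c.
Proof. by rewrite big_const iter_plus. Qed.

Lemma sum_const_cond n k c :
  \big[Rplus/0]_(i < n | (k <= i)%N) c = INR (n - k) * c.
Proof.
elim: n => [|n IH]; first by rewrite big_ord0 /=; ring.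
rewrite big_mkcond big_ord_recr /= -big_mkcond /= IH.
case: (leqP k n) => h.
- have -> : (n.+1 - k = (n - k).+1)%N by lia. rewrite S_INR; ring.
- have -> : (n.+1 - k = 0)%N by lia. have -> : (n - k = 0)%N by lia. simpl; ring.
Qed.

Lemma term_le_sum (T : finType) (F : T -> R) j :
  (forall i, 0 <= F i) -> F j <= \big[Rplus/0]_i F i.
Proof.
move=> h; rewrite (bigD1 j) //=.
have := @sum_ge0 T (index_enum T) (fun i => i != j) F (fun i _ => h i). lra.
Qed.

Lemma sum_ind M (j : 'I_M) : \big[Rplus/0]_(i < M) ind (j == i) = 1.
Proof.
rewrite (bigD1 j) //= eqxx big1 /=; first by (unfold ind; ring).
by move=> i /negbTE; rewrite eq_sym => ->.
Qed.

Lemma tv2 M (x y : 'I_M -> R) i :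
  \big[Rplus/0]_j x j = \big[Rplus/0]_j y j -> 2 * Rabs (x i - y i) <= tv x y.
Proof.
move=> hs; rewrite /tv (bigD1 i) //=.
have h0 : \big[Rplus/0]_j (x j - y j) = 0.
  rewrite /Rminus sum_add sum_opp hs; ring.
move: h0; rewrite (bigD1 i) //=; set S := (X in _ + X = 0) => h0.
have hS : S = -(x i - y i) by lra.
have : Rabs S <= \big[Rplus/0]_(j < M | j != i) Rabs (x j - y j) by apply: abs_sum.
rewrite hS Rabs_Ropp => h; apply: Rle_trans (Rplus_le_compat_l _ _ _ h); lra.
Qed.

Lemma maxdiff_arg M (p q : 'I_M -> R) : (0 < M)%N ->
  exists i, maxdiff p q <= Rabs (p i - q i).
Proof.
move=> hM.
suff [h|[i h]] : maxdiff p q <= 0 \/ exists i, maxdiff p q <= Rabs (p i - q i).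
- exists (Ordinal hM); have h1 := Rabs_pos (p (Ordinal hM) - q (Ordinal hM)); lra.
- by exists i.
rewrite /maxdiff; elim/big_rec: _ => [|i x _ [h|[j h]]]; first by left; lra.
- case: (Rle_dec (Rabs (p i - q i)) x) => h'.
  + left; rewrite Rmax_right; lra.
  + right; exists i; rewrite Rmax_left; lra.
- right. case: (Rle_dec (Rabs (p i - q i)) x) => h'.
  + exists j; rewrite Rmax_right; lra.
  + exists i; rewrite Rmax_left; lra.
Qed.

Lemma exp_le x y : x <= y -> exp x <= exp y.
Proof. case=> [h|->]; [left; exact: exp_increasing | lra]. Qed.

Lemma pos_of_distr M (p : 'I_M -> R) : \big[Rplus/0]_(i < M) p i = 1 -> (0 < M)%N.
Proof. case: M p => [p|//]; rewrite big_ord0; lra. Qed.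

Lemma ind_neg b : ind b = 1 - ind (~~ b).
Proof. by case: b; rewrite /ind /=; ring. Qed.

Unset Implicit Arguments.
Set Strict Implicit.

Theorem lemma1 (M t w d : nat) (pi : nat -> 'I_M -> R)
  (hatpi : nat -> 'I_M -> R) (e : nat -> R)
  (Wm : {set 'I_t}) (pi1 pi2 : 'I_M -> R) (delta eps_d : R) :
  (forall tau, is_distr (pi tau)) ->
  (forall k, (k <= w)%N -> is_distr (hatpi (t + k)%N)) ->
  (w + 1 <= d)%N ->
  (d <= t + w + 1)%N ->
  (forall k, (k <= w)%N -> (tv (hatpi (t + k)%N) (pi (t + k)%N) <= e k)) ->
  (forall tau : 'I_t, tau \in Wm -> (tau < t + w + 1 - d)%N) ->
  (d <= #|Wm|)%N ->
  (forall tau, (t + w + 1 - d <= tau <= t + w)%N -> pi tau = pi1) ->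
  (forall tau : 'I_t, tau \in Wm -> pi (tau : nat) = pi2) ->
  pi1 <> pi2 ->
  (maxdiff pi1 pi2 > 4 * INR (w + 1) * ew w e / INR d) ->
  (0 < delta < 1) ->
  (0 < eps_d < / 2 * maxdiff pi1 pi2 - INR (w + 1) * ew w e / INR d) ->
  (INR d > ln (4 / delta) * / (2 * eps_d ^ 2) + INR (w + 1)) ->
  (joint_prob pi
     (fun f => if Rlt_dec eps_d (tv (pihat_d w d hatpi f) (pihat_m Wm f))
               then true else false) >= 1 - delta).
Proof.
move=> Hpi Hhat Hwd Hdt Htv HWm HdWm Hpi1 Hpi2 Hneq Hmax Hdel Heps Hd.
have HdR : 0 < INR d by apply: lt_0_INR; apply/ltP; lia.
have HWR : INR d <= INR #|Wm| by apply: le_INR; apply/leP.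
have HWpos : 0 < INR #|Wm| by lra.
have Hw1 : 0 < INR (w + 1) by apply: lt_0_INR; apply/ltP; lia.
have HM : (0 < M)%N by case: (Hpi 0%N) => _; apply: pos_of_distr.
have [i0 Hi0] := maxdiff_arg pi1 pi2 HM.
set D := maxdiff pi1 pi2 in Hmax Heps Hi0.
set bias := INR (w + 1) * ew w e / INR d in Hmax Heps.
have Hcnt : INR (t - (t + w + 1 - d)) = INR d - INR (w + 1).
  have -> : (t - (t + w + 1 - d) = d - (w + 1))%N by lia.
  rewrite minus_INR //; apply/leP; lia.
have Hwk : forall k : 'I_w.+1, (k <= w)%N by move=> k; rewrite -ltnS.
have He0 : forall k : 'I_w.+1, 0 <= e k.
  move=> k; apply: Rle_trans (Htv k (Hwk k)); apply: sum_ge0 => j _; exact: Rabs_pos.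
have Hsume : INR (w + 1) * ew w e = \big[Rplus/0]_(k < w.+1) e k.
  rewrite /ew; field; lra.
have Hbias0 : 0 <= bias.
  rewrite /bias Hsume; apply: Rmult_le_pos; last by left; apply: Rinv_0_lt_compat.
  by apply: sum_ge0 => k _; apply: He0.
pose a (tau : 'I_t) : R :=
  if (t + w + 1 - d <= tau)%N then / INR d else if tau \in Wm then - / INR #|Wm| else 0.
have asum : forall g : 'I_t -> R,
  \big[Rplus/0]_tau (a tau * g tau) =
  / INR d * \big[Rplus/0]_(tau < t | (t + w + 1 - d <= tau)%N) g tau
  - / INR #|Wm| * \big[Rplus/0]_(tau in Wm) g tau.
  move=> g; rewrite -!sum_distr [X in _ = X - _]big_mkcond [X in _ = _ - X]big_mkcond
    /Rminus -sum_opp -sum_add.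
  apply: eq_bigr => tau _; rewrite /a.
  case: ifP => hP; case: ifP => hW //=.
  - by have := HWm tau hW; lia.
  - ring.
  - ring.
  - ring.
set C := / INR d * \big[Rplus/0]_(k < w.+1) hatpi (t + k)%N i0.
have Zeq : forall f : {ffun 'I_t -> 'I_M}, pihat_d w d hatpi f i0 - pihat_m Wm f i0 =
    \big[Rplus/0]_tau (a tau * ind (f tau == i0)) + C.
  move=> f; rewrite asum /pihat_d /pihat_m /C; ring.
set m := \big[Rplus/0]_tau (a tau * pi tau i0) + C.
have m_eq : m = (pi1 i0 - pi2 i0) + (C - INR (w + 1) / INR d * pi1 i0).
  rewrite /m asum.
  rewrite [X in / INR d * X](eq_bigr (fun _ => pi1 i0)); last first.
    move=> tau hP; rewrite Hpi1 //; apply/andP; split => //.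
    by have := ltn_ord tau; lia.
  rewrite [X in / INR #|Wm| * X](eq_bigr (fun _ => pi2 i0)); last by move=> tau hW; rewrite Hpi2.
  rewrite sum_const_cond sum_const_set Hcnt.
  field; lra.
have Cerr : Rabs (C - INR (w + 1) / INR d * pi1 i0) <= bias.
  have -> : C - INR (w + 1) / INR d * pi1 i0 =
      / INR d * \big[Rplus/0]_(k < w.+1) (hatpi (t + k)%N i0 - pi1 i0).
    rewrite /Rminus sum_add sum_opp big_const_ord iter_plus /C addn1 Rmult_plus_distr_l; congr (_ + _); rewrite /Rdiv; ring.
  rewrite Rabs_mult Rabs_inv Rabs_right; last lra.
  rewrite /bias Hsume /Rdiv Rmult_comm.
  apply: Rmult_le_compat_r; first by left; apply: Rinv_0_lt_compat.
  apply: Rle_trans (abs_sum _ _ _) _; apply: sum_le => k _.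
  have <- : pi (t + k)%N = pi1 by apply: Hpi1; apply/andP; split; have := Hwk k; lia.
  apply: Rle_trans (Htv k (Hwk k)).
  rewrite /tv; apply: (@term_le_sum _ (fun j => Rabs (hatpi (t + k)%N j - pi (t + k)%N j)) i0) => j.
  exact: Rabs_pos.
have mD : D - bias <= Rabs m.
  have h1 : Rabs (pi1 i0 - pi2 i0) - Rabs (C - INR (w + 1) / INR d * pi1 i0) <= Rabs m.
    rewrite m_eq.
    have := Rabs_triang_inv (pi1 i0 - pi2 i0) (- (C - INR (w + 1) / INR d * pi1 i0)).
    rewrite Rabs_Ropp /Rminus Ropp_involutive; lra.
  lra.
have sd : forall f : {ffun 'I_t -> 'I_M}, \big[Rplus/0]_i pihat_d w d hatpi f i = 1.
  move=> f; rewrite /pihat_d sum_distr sum_add exchange_big /=.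
  rewrite [X in _ * (X + _)](eq_bigr (fun _ => 1)); last by move=> tau _; apply: sum_ind.
  rewrite [X in _ * (_ + X)]exchange_big /=.
  rewrite [X in _ * (_ + X)](eq_bigr (fun _ => 1)); last first.
    by move=> k _; case: (Hhat k (Hwk k)).
  rewrite sum_const_cond big_const_ord iter_plus Hcnt -[w.+1]addn1; field; lra.
have sm : forall f : {ffun 'I_t -> 'I_M}, \big[Rplus/0]_i pihat_m Wm f i = 1.
  move=> f; rewrite /pihat_m sum_distr exchange_big /=.
  rewrite (eq_bigr (fun _ => 1)); last by move=> tau _; apply: sum_ind.
  rewrite sum_const_set Rmult_1_r Rinv_l //; exact: (Rgt_not_eq _ _ HWpos).
pose sg := if Rle_dec 0 m then 1 else -1.
have sg2 : sg * sg = 1.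
  rewrite /sg; case: (Rle_dec 0 m) => ? /=; ring.
have sgm : sg * m = Rabs m.
  rewrite /sg; case: (Rle_dec 0 m) => h /=.
  - rewrite Rabs_right; lra.
  - rewrite Rabs_left; lra.
have sgZ : forall z, sg * z <= Rabs z.
  move=> z; rewrite /sg; case: (Rle_dec 0 m) => ? /=; have := Rle_abs z; have := Rle_abs (- z);
  rewrite Rabs_Ropp; lra.
set s := D - bias - eps_d / 2.
have Hs : 3 / 2 * eps_d <= s by rewrite /s; lra.
pose b (tau : 'I_t) (j : 'I_M) := sg * a tau * (pi tau i0 - ind (j == i0)).
have Wfact : forall f : {ffun 'I_t -> 'I_M}, \big[Rplus/0]_tau b tau (f tau) =
    sg * (m - (pihat_d w d hatpi f i0 - pihat_m Wm f i0)).
  move=> f; rewrite Zeq /m.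
  have -> : \big[Rplus/0]_tau b tau (f tau) =
     \big[Rplus/0]_tau (sg * (a tau * pi tau i0) + - (sg * (a tau * ind (f tau == i0)))).
    by apply: eq_bigr => tau _; rewrite /b; ring.
  rewrite sum_add sum_opp !sum_distr; ring.
have fail : forall f : {ffun 'I_t -> 'I_M}, ~ eps_d < tv (pihat_d w d hatpi f) (pihat_m Wm f) ->
    s <= \big[Rplus/0]_tau b tau (f tau).
  move=> f hf; rewrite Wfact.
  have := @tv2 M (pihat_d w d hatpi f) (pihat_m Wm f) i0 (etrans (sd f) (esym (sm f))).
  have := sgZ (pihat_d w d hatpi f i0 - pihat_m Wm f i0).
  rewrite /s; lra.
have s0 : 0 < s by lra.
set mu := 2 * s * INR d.
have Hmu0 : 0 <= mu by rewrite /mu; nra.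
have Htot : \big[Rplus/0]_(f : {ffun 'I_t -> 'I_M}) \big[Rmult/1]_(tau < t) pi (tau : nat) (f tau) = 1.
  rewrite -(bigA_distr_bigA (fun (tau : 'I_t) (j : 'I_M) => pi (tau : nat) j)) /=.
  by rewrite big1 // => tau _; case: (Hpi tau).
have Hmgf : forall tau : 'I_t,
    \big[Rplus/0]_(j < M) (pi tau j * exp (mu * b tau j)) <= exp ((mu * a tau) ^ 2 / 8).
  move=> tau; case: (Hpi tau) => hp0 hp1'.
  have hp1 : \big[Rplus/0]_(j < M) pi tau j = 1 := hp1'.
  have hp : 0 <= pi tau i0 <= 1.
    split; first exact: hp0.
    rewrite -hp1; exact: (@term_le_sum _ (pi tau) i0 hp0).
  have hh := hp1; move: hh; rewrite (bigD1 i0) //= => hh.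
  rewrite (bigD1 i0) //=.
  rewrite (eq_bigr (fun j => exp (mu * (sg * a tau * pi tau i0)) * pi tau j)); last first.
    move=> j hj; rewrite /b /ind (negbTE hj) /= Rminus_0_r; ring.
  rewrite sum_distr [X in exp _ * X](_ : _ = 1 - pi tau i0); last by lra.
  rewrite /b /ind eqxx.
  have := @hoeff (pi tau i0) (- (mu * sg * a tau)) hp.
  have -> : (- (mu * sg * a tau)) ^ 2 = (mu * a tau) ^ 2 * (sg * sg) by ring.
  rewrite sg2 Rmult_1_r.
  have -> : - (- (mu * sg * a tau) * pi tau i0) = mu * (sg * a tau * pi tau i0) by ring.
  have -> : - (mu * sg * a tau) * (1 - pi tau i0) = mu * (sg * a tau * (pi tau i0 - 1)) by ring.
  have -> : mu * a tau * (mu * a tau * 1) / 8 = (mu * a tau) ^ 2 / 8 by lra.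
  move=> h; apply: Rle_trans h; right; ring.
pose E := (fun f : {ffun 'I_t -> 'I_M} =>
   if Rlt_dec eps_d (tv (pihat_d w d hatpi f) (pihat_m Wm f)) then true else false).
have Hfail : \big[Rplus/0]_(f : {ffun 'I_t -> 'I_M})
      (\big[Rmult/1]_(tau < t) pi (tau : nat) (f tau) * ind (~~ E f))
    <= exp (- (mu * s)) * \big[Rmult/1]_(tau < t) exp ((mu * a tau) ^ 2 / 8).
  apply: (Rle_trans _ (\big[Rplus/0]_(f : {ffun 'I_t -> 'I_M}) (exp (- (mu * s)) *
     \big[Rmult/1]_(tau < t) (pi (tau : nat) (f tau) * exp (mu * b tau (f tau)))))).
    apply: sum_le => f _.
    rewrite big_split /= -exp_sum.
    have hP : 0 <= \big[Rmult/1]_(tau < t) pi (tau : nat) (f tau).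
      by apply: prod_ge0 => tau _; case: (Hpi tau).
    have hI : ind (~~ E f) <= exp (- (mu * s)) * exp (\big[Rplus/0]_(tau < t) (mu * b tau (f tau))).
      rewrite -exp_plus sum_distr /E.
      case: (Rlt_dec eps_d _) => h /=.
        by rewrite /ind; left; apply: exp_pos.
      have := fail f h => h2.
      have h3 : s <= \big[Rplus/0]_(tau < t) b tau (f tau) := h2.
      rewrite /ind -exp_0; apply: exp_le; have := Rmult_le_compat_l mu _ _ Hmu0 h3; move=> hh; apply: (Rplus_le_reg_l (mu * s)); rewrite Rplus_0_r -Rplus_assoc Rplus_opp_r Rplus_0_l; exact: hh.
    have -> : exp (- (mu * s)) * (\big[Rmult/1]_(tau < t) pi (tau : nat) (f tau) *
        exp (\big[Rplus/0]_(tau < t) (mu * b tau (f tau)))) =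
        \big[Rmult/1]_(tau < t) pi (tau : nat) (f tau) * (exp (- (mu * s)) *
        exp (\big[Rplus/0]_(tau < t) (mu * b tau (f tau)))) by ring.
    by apply: Rmult_le_compat_l.
  rewrite sum_distr.
  rewrite -(bigA_distr_bigA (fun (tau : 'I_t) (j : 'I_M) => pi (tau : nat) j * exp (mu * b tau j))) /=.
  apply: Rmult_le_compat_l; first by left; apply: exp_pos.
  apply: prod_le => tau _; split; last exact: Hmgf.
  apply: sum_ge0 => j _; apply: Rmult_le_pos; [by case: (Hpi tau)| left; apply: exp_pos].
rewrite -exp_sum in Hfail.
have HA : \big[Rplus/0]_(tau < t) ((mu * a tau) ^ 2 / 8) <= s ^ 2 * INR d.
  have -> : \big[Rplus/0]_(tau < t) ((mu * a tau) ^ 2 / 8) =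
      mu ^ 2 / 8 * \big[Rplus/0]_(tau < t) (a tau * a tau).
    rewrite -sum_distr; apply: eq_bigr => tau _. rewrite /Rdiv; ring.
  rewrite asum.
  rewrite [X in / INR d * X](eq_bigr (fun _ => / INR d)); last by move=> tau hP; rewrite /a hP.
  rewrite [X in / INR #|Wm| * X](eq_bigr (fun _ => - / INR #|Wm|)); last first.
    move=> tau hW; rewrite /a hW; case: ifP => // hP; by have := HWm tau hW; lia.
  rewrite sum_const_cond sum_const_set Hcnt.
  have hA1 : / INR d * ((INR d - INR (w + 1)) * / INR d) <= / INR d.
    have -> : / INR d * ((INR d - INR (w + 1)) * / INR d) = / INR d * ((INR d - INR (w + 1)) / INR d) by [].
    have : (INR d - INR (w + 1)) / INR d <= 1.
      apply: (Rmult_le_reg_r (INR d)) => //. rewrite /Rdiv Rmult_assoc Rinv_l; lra.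
    have : 0 < / INR d by apply: Rinv_0_lt_compat.
    nra.
  have hA2 : forall x : R, 0 < x -> / x * (x * - / x) = - / x.
    by move=> x hx; field; apply: Rgt_not_eq.
  have hA3 : / INR #|Wm| <= / INR d by apply: Rinv_le_contravar.
  have hmu : mu ^ 2 / 8 * (2 * / INR d) = s ^ 2 * INR d.
    by rewrite /mu; field; apply: Rgt_not_eq.
  have hmu2 : 0 <= mu ^ 2 / 8 by nra.
  rewrite hA2 // /Rminus Ropp_involutive -hmu.
  apply: Rmult_le_compat_l => //.
  have -> : 2 * / INR d = / INR d + / INR d by ring.
  apply: Rplus_le_compat; [exact: hA1 | exact: hA3].
have Hfin : exp (- (mu * s)) * exp (\big[Rplus/0]_(tau < t) ((mu * a tau) ^ 2 / 8)) < delta.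
  rewrite -exp_plus.
  have hL : - ln delta < ln (4 / delta).
    rewrite -ln_Rinv; last lra.
    apply: ln_increasing; first by apply: Rinv_0_lt_compat; lra.
    rewrite /Rdiv; have : 0 < / delta by apply: Rinv_0_lt_compat; lra. lra.
  have hln : ln delta < 0 by rewrite -ln_1; apply: ln_increasing; lra.
  have he2 : 0 < eps_d ^ 2 by nra.
  have hd2 : ln (4 / delta) < 2 * eps_d ^ 2 * INR d.
    have h1 : ln (4 / delta) * / (2 * eps_d ^ 2) < INR d by have := pos_INR (w + 1); lra.
    have h2 : ln (4 / delta) = (ln (4 / delta) * / (2 * eps_d ^ 2)) * (2 * eps_d ^ 2).
      by field; lra.
    rewrite h2; nra.
  have hs2 : 9 / 4 * eps_d ^ 2 <= s ^ 2 by nra.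
  have hfin : - (mu * s) + \big[Rplus/0]_(tau < t) ((mu * a tau) ^ 2 / 8) < ln delta.
    have hsd : 9 / 4 * eps_d ^ 2 * INR d <= s ^ 2 * INR d.
      by apply: Rmult_le_compat_r; lra.
    have -> : mu * s = 2 * (s ^ 2 * INR d) by rewrite /mu; ring.
    lra.
  rewrite -(exp_ln delta); last lra.
  by apply: exp_increasing.
have Hj : joint_prob pi E + \big[Rplus/0]_(f : {ffun 'I_t -> 'I_M})
      (\big[Rmult/1]_(tau < t) pi (tau : nat) (f tau) * ind (~~ E f)) =
    \big[Rplus/0]_(f : {ffun 'I_t -> 'I_M}) \big[Rmult/1]_(tau < t) pi (tau : nat) (f tau).
  rewrite /joint_prob -sum_add; apply: eq_bigr => f _.
  rewrite [ind (E f)]ind_neg; ring.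
have Hjp : joint_prob pi E = 1 - \big[Rplus/0]_(f : {ffun 'I_t -> 'I_M})
      (\big[Rmult/1]_(tau < t) pi (tau : nat) (f tau) * ind (~~ E f)).
  apply: (Rplus_eq_reg_r (\big[Rplus/0]_(f : {ffun 'I_t -> 'I_M}) (\big[Rmult/1]_(tau < t) pi (tau : nat) (f tau) * ind (~~ E f)))).
  rewrite Hj Htot; ring.
change (joint_prob pi E >= 1 - delta).
rewrite Hjp.
have := Rle_lt_trans _ _ _ Hfail Hfin.
move=> hh; lra.
Qed.
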